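(* Consider the $16$ families of two-qubit hyperplane-states of $\mathcal{W}(3,2)$ associated with the $10$ grids $\mathcal{Q}_0,\dots,\mathcal{Q}_9$ and the $6$ ovoids $\mathcal{O}_1,\dots,\mathcal{O}_6$ of $\mathcal{W}(3,2)$, each restricted to states with maximally-mixed subsystems. Then: (i) the $\mathcal{Q}_0$-hyperplane states with maximally-mixed subsystems are exactly the general two-qubit states with maximally-mixed subsystems; (ii) the $\mathcal{Q}_i$-hyperplane states with maximally-mixed subsystems, $i=1,\dots,9$, correspond to the $X$-states of Group 2 with maximally-mixed subsystems. That is, for each $i$ there is a Group 2 point $p$ such that this family coincides with the family of type-$p$ $X$-states with maximally-mixed subsystems, and this gives a one-to-one correspondence between the $9$ grids $\mathcal{Q}_1,\dots,\mathcal{Q}_9$ and the $9$ Group 2 points; (iii) similarly, the $\mathcal{O}_i$-hyperplane states with maximally-mixed subsystems, $i=1,\dots,6$, correspond one-to-one to the $X$-states of Group 1 with maximally-mixed subsystems.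
   Context: $\mathcal{W}(3,2)$ has: - points: the $15$ nontrivial two-qubit Pauli operators $A\otimes B$ ($A,B\in\{I,X,Y,Z\}$, not both $I$), taken with phase $+1$; - lines: triples $\{P,Q,PQ\}$ (up to phase) of pairwise commuting such operators. A geometric hyperplane is a set of points meeting every line either in the whole line or in exactly one point. There are $31$ of them: - $15$ perp-sets $H_p=\{q: q\text{ commutes with }p\}$; - $10$ grids, i.e. $9$-point hyperplanes carrying $6$ lines, $3$ points per line and $2$ lines per point; - $6$ ovoids, i.e. $5$ pairwise non-commuting points. $\mathcal{Q}_0=\{A\otimes B: A,B\in\{X,Y,Z\}\}$ is one of the grids; $\mathcal{Q}_1,\dots,\mathcal{Q}_9$ denote the other nine. $\mathcal{O}_1,\dots,\mathcal{O}_6$ denote the six ovoids. For a geometric hyperplane $H$, an $H$-hyperplane state is a two-qubit density matrix $\rho=\tfrac14(I\otimes I+\sum_{q\in H}c_q q)$ with real coefficients $c_q$. For a point $p$, the type-$p$ $X$-states are the $H_p$-hyperplane states. Group 1 points are $I\otimes X, I\otimes Y, I\otimes Z, X\otimes I, Y\otimes I, Z\otimes I$; Group 2 points are the nine $A\otimes B$ with $A,B\in\{X,Y,Z\}$. A state has maximally-mixed subsystems if both one-qubit reduced states equal $\tfrac12 I$, i.e. all coefficients of operators of the form $A\otimes I$ or $I\otimes B$ vanish. *)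

(* Defs.v *)
From HB Require Import structures.
From mathcomp Require Import all_boot all_order all_algebra.
From mathcomp Require Import complex.
Set Implicit Arguments. Unset Strict Implicit. Unset Printing Implicit Defensive.
Import Order.TTheory GRing.Theory Num.Theory.
Local Open Scope ring_scope.
Local Open Scope complex_scope.

(* Single-qubit Pauli labels: 0 = I, 1 = X, 2 = Y, 3 = Z.
   A two-qubit Pauli label is a pair (a, b) standing for A (x) B. *)
Definition pt := ('I_4 * 'I_4)%type.

(* the 15 points of W(3,2): nontrivial two-qubit Paulis *)
Definition Pts : {set pt} := [set p : pt | p != (ord0, ord0)].

Section Ops.
Variable R : rcfType.
Local Notation C := R[i].

Definition pauliX : 'M[C]_2 := \matrix_(i < 2, j < 2) (if i != j then 1 else 0).
Definition pauliY : 'M[C]_2 :=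
  \matrix_(i < 2, j < 2) (if i == j then 0 else if val i == 0%N then - 'i else 'i).
Definition pauliZ : 'M[C]_2 :=
  \matrix_(i < 2, j < 2) (if i == j then (if val i == 0%N then 1 else -1) else 0).

Definition pauli (a : 'I_4) : 'M[C]_2 :=
  match val a with
  | 0 => 1%:M
  | 1 => pauliX
  | 2 => pauliY
  | _ => pauliZ
  end.

Definition kron (A B : 'M[C]_2) : 'M[C]_4 :=
  \matrix_(i < 4, j < 4)
    (A (inord (i %/ 2)) (inord (j %/ 2)) * B (inord (i %% 2)) (inord (j %% 2))).

Definition op (p : pt) : 'M[C]_4 := kron (pauli p.1) (pauli p.2).

Definition commute (p q : pt) : bool := op p *m op q == op q *m op p.

Definition is_line (p q r : pt) : Prop :=
  [/\ [&& p \in Pts, q \in Pts & r \in Pts],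
      [&& p != q, q != r & p != r],
      [&& commute p q, commute q r & commute p r]
    & exists lam : C, op r = lam *: (op p *m op q)].

Definition hyperplane (H : {set pt}) : Prop :=
  H \subset Pts /\
  forall p q r, is_line p q r ->
    #|H :&: [set p; q; r]| = 1%N \/ #|H :&: [set p; q; r]| = 3%N.

Definition perp (p : pt) : {set pt} := [set q in Pts | commute q p].

Definition grid (H : {set pt}) : Prop := hyperplane H /\ #|H| = 9%N.

Definition ovoid (H : {set pt}) : Prop :=
  [/\ hyperplane H, #|H| = 5%N &
      forall p q, p \in H -> q \in H -> p != q -> ~~ commute p q].

Definition psd (M : 'M[C]_4) : Prop :=
  forall v : 'cV[C]_4, 0 <= ((map_mx Num.conj v)^T *m M *m v) ord0 ord0.

Definition density (rho : 'M[C]_4) : Prop := psd rho /\ \tr rho = 1.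

Definition hstate (H : {set pt}) (rho : 'M[C]_4) : Prop :=
  density rho /\
  exists c : pt -> R,
    rho = (4%:R)^-1 *: (1%:M + \sum_(q in H) (c q)%:C *: op q).

Definition redA (rho : 'M[C]_4) : 'M[C]_2 :=
  \matrix_(i < 2, j < 2) \sum_(k < 2) rho (inord (2 * i + k)) (inord (2 * j + k)).
Definition redB (rho : 'M[C]_4) : 'M[C]_2 :=
  \matrix_(i < 2, j < 2) \sum_(k < 2) rho (inord (2 * k + i)) (inord (2 * k + j)).

Definition mms (rho : 'M[C]_4) : Prop :=
  redA rho = (2%:R)^-1%:M /\ redB rho = (2%:R)^-1%:M.

End Ops.

Definition Q0 : {set pt} := [set p : pt | (p.1 != ord0) && (p.2 != ord0)].
Definition group2 : {set pt} := Q0.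
Definition group1 : {set pt} := [set p in Pts | (p.1 == ord0) || (p.2 == ord0)].

(* Main.v *)
Require Import Defs.
From HB Require Import structures.
From mathcomp Require Import all_boot all_order all_algebra.
From mathcomp Require Import complex.
From mathcomp Require Import ring lra zify.
Import Order.TTheory GRing.Theory Num.Theory.

Local Open Scope ring_scope.

Definition s1 (a x : nat) : nat :=
  match a, x with
  | 1, 0 | 2, 0 => 1
  | 1, _ | 2, _ => 0
  | _, x => x end.
Definition e1 (a x : nat) : nat :=
  match a, x with
  | 2, 0 => 3 | 2, _ => 1
  | 3, 0 => 0 | 3, _ => 2
  | _, _ => 0 end.
Definition hf (i : nat) : nat := match i with 0 | 1 => 0 | _ => 1 end.
Definition pr (i : nat) : nat := match i with 1 | 3 => 1 | _ => 0 end.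
Definition comb (x y : nat) : nat :=
  match x, y with 0, 0 => 0 | 0, _ => 1 | _, 0 => 2 | _, _ => 3 end.
Definition sgn (a b i : nat) : nat := comb (s1 a (hf i)) (s1 b (pr i)).
Definition exn (a b i : nat) : nat := Nat.add (e1 a (hf i)) (e1 b (pr i)).

Section W.
Variable R : rcfType.
Local Notation C := R[i].

Fixpoint w (n : nat) : C :=
  match n with 0 => 1 | 1 => 'i%C | 2 => -1 | 3 => - 'i%C | n.+4 => w n end.

Lemma i4 : 'i%C ^+ 4 = 1 :> C.
Proof. by rewrite -[4%N]/(2 * 2)%N exprM sqr_i expr2 mulN1r opprK. Qed.

Lemma wE n : w n = 'i%C ^+ n.
Proof.
elim: n {-2}n (leqnn n) => [|m IH] n.
  by rewrite leqn0 => /eqP ->.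
case: n => [|[|[|[|n]]]] Hn /=;
  [by rewrite expr0 | by rewrite expr1 | by rewrite sqr_i | by rewrite exprS sqr_i mulrN1 |].
rewrite IH; last by rewrite -ltnS (leq_trans _ Hn) // !ltnS leqW // leqW // leqW.
by rewrite -addn4 exprD i4 mulr1.
Qed.

Lemma wD m n : w (m + n) = w m * w n.
Proof. by rewrite !wE exprD. Qed.

Lemma wmod n : w n = w (n %% 4)%N.
Proof.
by rewrite {1}(divn_eq n 4) wD !wE mulnC exprM i4 expr1n mul1r.
Qed.

Lemma w_neq0 n : w n != 0.
Proof.
rewrite wmod; have : (n %% 4 < 4)%N by rewrite ltn_mod.
case: (n %% 4)%N => [|[|[|[|]]]] //= _.
- exact: oner_neq0.
- by rewrite eq_complex /= oner_eq0 andbF.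
- by rewrite oppr_eq0 oner_neq0.
- by rewrite oppr_eq0 eq_complex /= oner_eq0 andbF.
Qed.

End W.

Local Close Scope ring_scope.
Local Open Scope ring_scope.

Section B.
Variable R : rcfType.
Local Notation C := R[i].
Local Notation w := (@w R).

Lemma pauli_entry (a : 'I_4) (x y : 'I_2) :
  pauli R a x y = if (y == s1 a x :> nat) then w (e1 a x) else 0.
Proof.
case: a => [[|[|[|[|a]]]] Ha] //; case: x => [[|[|x]] Hx] //; case: y => [[|[|y]] Hy] //;
  rewrite /pauli /= ?mxE //=.
Qed.

End B.
Section B2.
Variable R : rcfType.
Local Notation C := R[i].
Local Notation w := (@w R).

Lemma s1_lt a x : (x < 2)%N -> (s1 a x < 2)%N.
Proof. by case: a => [|[|[|[|a]]]]; case: x => [|[|x]]. Qed.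

Lemma half_lt i : (i < 4)%N -> (hf i < 2)%N.
Proof. by case: i => [|[|[|[|i]]]]. Qed.
Lemma par_lt i : (i < 4)%N -> (pr i < 2)%N.
Proof. by case: i => [|[|[|[|i]]]]. Qed.

Lemma inord_half (i : 'I_4) : nat_of_ord (inord (i %/ 2) : 'I_2) = hf i.
Proof. by case: i => [[|[|[|[|i]]]] Hi] //; rewrite inordK. Qed.
Lemma inord_par (i : 'I_4) : nat_of_ord (inord (i %% 2) : 'I_2) = pr i.
Proof. by case: i => [[|[|[|[|i]]]] Hi] //; rewrite inordK. Qed.

Lemma op_entry (p : pt) (i j : 'I_4) :
  op R p i j = if (j == sgn p.1 p.2 i :> nat) then w (exn p.1 p.2 i) else 0.
Proof.
rewrite /op /kron mxE !pauli_entry !inord_half !inord_par /sgn /exn.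
have := s1_lt p.1 _ (half_lt _ (ltn_ord i)); have := s1_lt p.2 _ (par_lt _ (ltn_ord i)).
move: (s1 p.1 (hf i)) (s1 p.2 (pr i)) (e1 p.1 (hf i)) (e1 p.2 (pr i)) => x y u v.
case: j => [[|[|[|[|j]]]] Hj] //=; case: x => [|[|x]] //; case: y => [|[|y]] //= _ _;
  rewrite ?mulr0 ?mul0r // -wD //.
Qed.

End B2.

Local Close Scope ring_scope.
Local Open Scope ring_scope.

Definition quad := (nat * nat * nat * nat)%type.
Definition gstep (z : quad) (n : nat) : quad :=
  let: (a, b, c, d) := z in
  match (n %% 4)%N with
  | 0 => (a.+1, b, c, d) | 1 => (a, b.+1, c, d)
  | 2 => (a, b, c.+1, d) | _ => (a, b, c, d.+1) end.
Definition cnt (l : seq (bool * nat)) : quad :=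
  foldr (fun t z => if t.1 then gstep z t.2 else z) (0, 0, 0, 0)%N l.
Definition qeq (z z' : quad) : bool :=
  let: (a, b, c, d) := z in let: (a', b', c', d') := z' in
  (a + c' == a' + c)%N && (b + d' == b' + d)%N.
Definition all4 (P : nat -> bool) := all P (iota 0 4).

Lemma all4P P : all4 P -> forall n, (n < 4)%N -> P n.
Proof. by move=> /allP H n Hn; apply: H; rewrite mem_iota. Qed.
Arguments all4P {P} _ {n}.

Section Cs.
Variable R : rcfType.
Local Notation C := R[i].
Local Notation w := (@w R).

Definition gval (z : quad) : C :=
  let: (a, b, c, d) := z in (a%:R - c%:R) + 'i%C * (b%:R - d%:R).

Lemma gstepE z n : gval (gstep z n) = w n + gval z.
Proof.
case: z => [[[a b] c] d]; rewrite /gstep (wmod R n).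
have : (n %% 4 < 4)%N by rewrite ltn_mod.
case: (n %% 4)%N => [|[|[|[|]]]] //= _; rewrite ?mulrSr; ring.
Qed.

Lemma wsum (l : seq (bool * nat)) :
  \sum_(t <- l) (if t.1 then w t.2 else 0) = gval (cnt l).
Proof.
elim: l => [|[b n] l IH]; first by rewrite big_nil /= !subrr mulr0 addr0.
rewrite big_cons IH /=; case: b => //=; first by rewrite gstepE.
by rewrite add0r.
Qed.

Lemma qeqP z z' : qeq z z' -> gval z = gval z'.
Proof.
case: z => [[[a b] c] d]; case: z' => [[[a' b'] c'] d'] /= /andP[/eqP H1 /eqP H2].
have E1 : (a%:R - c%:R : C) = a'%:R - c'%:R.
  by apply/eqP; rewrite subr_eq addrAC eq_sym subr_eq -!natrD H1 addnC.
have E2 : (b%:R - d%:R : C) = b'%:R - d'%:R.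
  by apply/eqP; rewrite subr_eq addrAC eq_sym subr_eq -!natrD H2 addnC.
by rewrite E1 E2.
Qed.

End Cs.
Arguments qeqP {R z z'}.

Local Close Scope ring_scope.
Local Open Scope ring_scope.

Definition lx (a b : nat) : nat :=
  match a, b with
  | 0, b => b | a, 0 => a
  | 1, 2 | 2, 1 => 3 | 1, 3 | 3, 1 => 2 | 2, 3 | 3, 2 => 1 | _, _ => 0 end.
Lemma lx_lt {a b} : (a < 4)%N -> (b < 4)%N -> (lx a b < 4)%N.
Proof. by case: a => [|[|[|[|a]]]]; case: b => [|[|[|[|b]]]]. Qed.
Definition pxor (p q : pt) : pt :=
  (Ordinal (lx_lt (ltn_ord p.1) (ltn_ord q.1)), Ordinal (lx_lt (ltn_ord p.2) (ltn_ord q.2))).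
Definition ph (a b c d : nat) : nat :=
  (exn a b 0 + exn c d (sgn a b 0) + 8 - exn (lx a c) (lx b d) 0)%N.
Definition prodl (a b c d i j : nat) : seq (bool * nat) :=
  [seq ((k == sgn a b i) && (j == sgn c d k), (exn a b i + exn c d k)%N) | k <- iota 0 4].
Definition check_prod : bool :=
  all4 (fun a => all4 (fun b => all4 (fun c => all4 (fun d => all4 (fun i => all4 (fun j =>
    qeq (cnt (prodl a b c d i j))
        (cnt [:: (j == sgn (lx a c) (lx b d) i, (ph a b c d + exn (lx a c) (lx b d) i)%N)]))))))).
Lemma check_prodT : check_prod. Proof. by vm_compute. Qed.

Section D.
Variable R : rcfType.
Local Notation C := R[i].
Local Notation w := (@w R).
Local Notation gval := (@gval R).

Lemma sum4 (F : nat -> C) : \sum_(k < 4) F k = \sum_(k <- iota 0 4) F k.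
Proof. by rewrite -(big_mkord xpredT). Qed.

Lemma ifmul b1 b2 u v :
  (if b1 then w u else 0) * (if b2 then w v else 0) = if b1 && b2 then w (u + v) else 0.
Proof. by case: b1; case: b2; rewrite ?mulr0 ?mul0r // wD. Qed.

Lemma ifsum (l : seq (bool * nat)) : gval (cnt l) = \sum_(t <- l) (if t.1 then w t.2 else 0).
Proof. by rewrite wsum. Qed.

Lemma prod_entry (p q : pt) (i j : 'I_4) :
  (op R p *m op R q) i j = gval (cnt (prodl p.1 p.2 q.1 q.2 i j)).
Proof.
rewrite mxE ifsum big_map.
pose F := fun k : nat => if (k == sgn p.1 p.2 i) && (nat_of_ord j == sgn q.1 q.2 k) then
   w (exn p.1 p.2 i + exn q.1 q.2 k) else 0.
rewrite (eq_bigr (fun k : 'I_4 => F k)); first by rewrite sum4.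
by move=> k _; rewrite !op_entry ifmul.
Qed.

Lemma op_prod (p q : pt) :
  op R p *m op R q = w (ph p.1 p.2 q.1 q.2) *: op R (pxor p q).
Proof.
apply/matrixP => i j; rewrite prod_entry mxE op_entry /=.
have -> : w (ph p.1 p.2 q.1 q.2) * (if j == sgn (lx p.1 q.1) (lx p.2 q.2) i :> nat
    then w (exn (lx p.1 q.1) (lx p.2 q.2) i) else 0)
  = gval (cnt [:: (j == sgn (lx p.1 q.1) (lx p.2 q.2) i :> nat,
       (ph p.1 p.2 q.1 q.2 + exn (lx p.1 q.1) (lx p.2 q.2) i)%N)]).
  rewrite ifsum big_cons big_nil addr0 /=.
  by case: ifP; rewrite ?mulr0 // wD.
apply: qeqP.
move: check_prodT; rewrite /check_prod => H.
by have := all4P (all4P (all4P (all4P (all4P (all4P H (ltn_ord p.1)) (ltn_ord p.2)) (ltn_ord q.1)) (ltn_ord q.2)) (ltn_ord i)) (ltn_ord j).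
Qed.

End D.

Local Close Scope ring_scope.
Local Open Scope ring_scope.

Definition q4 : quad := (4, 0, 0, 0)%N.
Definition q0 : quad := (0, 0, 0, 0)%N.
Definition trl (a b : nat) := [seq (i == sgn a b i, exn a b i) | i <- iota 0 4].
Definition check_tr := all4 (fun a => all4 (fun b =>
  qeq (cnt (trl a b)) (if (a == 0%N) && (b == 0%N) then q4 else q0))).
Lemma check_trT : check_tr. Proof. by vm_compute. Qed.
Definition check_orth := all4 (fun a => all4 (fun b => all4 (fun c => all4 (fun d =>
  (((lx a c == 0%N) && (lx b d == 0%N)) == ((a == c) && (b == d))) &&
  ((a == c) && (b == d) ==> (ph a b c d %% 4 == 0)%N) &&
  (lx a c == lx c a) && (lx b d == lx d b))))).
Lemma check_orthT : check_orth. Proof. by vm_compute. Qed.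
Definition qswap (z : quad) : quad := let: (a, b, c, d) := z in (a, d, c, b).
Definition check_herm := all4 (fun a => all4 (fun b => all4 (fun i => all4 (fun j =>
  qeq (qswap (cnt [:: (j == sgn a b i, exn a b i)])) (cnt [:: (i == sgn a b j, exn a b j)]))))).
Lemma check_hermT : check_herm. Proof. by vm_compute. Qed.
Definition compl (i j k l : nat) :=
  [seq ((j == sgn x.1 x.2 i) && (l == sgn x.1 x.2 k), (exn x.1 x.2 i + exn x.1 x.2 k)%N)
  | x <- [seq (a, b) | a <- iota 0 4, b <- iota 0 4]].
Definition check_comp := all4 (fun i => all4 (fun j => all4 (fun k => all4 (fun l =>
  qeq (cnt (compl i j k l)) (if (i == l) && (j == k) then q4 else q0))))).
Lemma check_compT : check_comp. Proof. by vm_compute. Qed.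

Section E.
Variable R : rcfType.
Local Notation C := R[i].
Local Notation w := (@w R).
Local Notation gval := (@gval R).
Local Notation op := (op R).

Lemma pt_eqE (p q : pt) : (p == q) = (p.1 == q.1 :> nat) && (p.2 == q.2 :> nat).
Proof. by case: p q => [a b] [c d]. Qed.

Lemma tr_op (s : pt) : \tr (op s) = if (s.1 == 0 :> nat) && (s.2 == 0 :> nat) then 4 else 0.
Proof.
rewrite /mxtrace.
pose F := fun k : nat => if k == sgn s.1 s.2 k then w (exn s.1 s.2 k) else 0.
rewrite (eq_bigr (fun k : 'I_4 => F k)); last by move=> k _; rewrite op_entry.
rewrite sum4.
have -> : \sum_(k <- iota 0 4) F k = gval (cnt (trl s.1 s.2)) by rewrite ifsum big_map.
rewrite (qeqP (all4P (all4P check_trT (ltn_ord s.1)) (ltn_ord s.2))).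
by case: ifP => _ /=; rewrite ?subr0 ?mulr0 ?addr0.
Qed.

Lemma tr_prod (p q : pt) : \tr (op p *m op q) = if p == q then 4 else 0.
Proof.
have H := all4P (all4P (all4P (all4P check_orthT (ltn_ord p.1)) (ltn_ord p.2)) (ltn_ord q.1)) (ltn_ord q.2).
case/andP: H => /andP[/andP[/eqP E1 /implyP E2] _] _.
rewrite op_prod mxtraceZ tr_op /= E1 pt_eqE.
case: ifP => [Hc|_]; last by rewrite mulr0. have /eqP E3 := E2 Hc. rewrite (wmod R (ph _ _ _ _)) E3 /= mul1r. reflexivity.
Qed.

Lemma op_neq0 (s : pt) : op s != 0.
Proof.
apply/eqP => H; have := tr_prod s s; rewrite H mul0mx mxtrace0 eqxx => /eqP.
by rewrite eq_sym pnatr_eq0.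
Qed.

Lemma scal_op_inj (s : pt) (c d : C) : c *: op s = d *: op s -> c = d.
Proof.
move=> H; have := congr1 (fun M => \tr (op s *m M)) H.
rewrite /= -!scalemxAr !mxtraceZ tr_prod eqxx => /mulIf; apply.
by rewrite pnatr_eq0.
Qed.

Lemma w_inj m n : w m = w n -> (m %% 4 == n %% 4)%N.
Proof.
rewrite (wmod R m) (wmod R n).
have : (m %% 4 < 4)%N by rewrite ltn_mod.
have : (n %% 4 < 4)%N by rewrite ltn_mod.
case: (m %% 4)%N => [|[|[|[|]]]] //; case: (n %% 4)%N => [|[|[|[|]]]] //= _ _;
  move=> H; have := congr1 (@complex.Re R) H; have := congr1 (@complex.Im R) H => /= ; lra.
Qed.

End E.

Local Close Scope ring_scope.
Local Open Scope ring_scope.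

Definition commn (a b c d : nat) := (ph a b c d %% 4 == ph c d a b %% 4)%N.

Section F.
Variable R : rcfType.
Local Notation C := R[i].
Local Notation w := (@w R).
Local Notation gval := (@gval R).
Local Notation op := (op R).

Lemma pxorC (p q : pt) : pxor q p = pxor p q.
Proof.
have H := all4P (all4P (all4P (all4P check_orthT (ltn_ord p.1)) (ltn_ord p.2)) (ltn_ord q.1)) (ltn_ord q.2).
case/andP: H => /andP[_ /eqP E1] /eqP E2.
by apply/eqP; rewrite pt_eqE /= E1 E2 !eqxx.
Qed.

Lemma commuteE (p q : pt) : Defs.commute R p q = commn p.1 p.2 q.1 q.2.
Proof.
rewrite /Defs.commute !op_prod (pxorC q p) /commn.
apply/eqP/eqP => [/scal_op_inj /w_inj /eqP //|H].
by rewrite (wmod R (ph p.1 _ _ _)) H -wmod.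
Qed.

Lemma gval_conj (z : quad) : Num.conj (gval z) = gval (qswap z).
Proof.
case: z => [[[a b] c] d] /=.
have Ei : Num.conj ('i%C : C) = - 'i%C.
  have -> : Num.conj ('i%C : C) = conjc 'i%C by [].
  by apply/eqP; rewrite eq_complex /= oppr0 !eqxx.
rewrite rmorphD rmorphM !rmorphB !rmorph_nat [X in _ + X * _](_ : _ = - 'i%C); first ring.
exact: Ei.
Qed.

Lemma op_herm (p : pt) (i j : 'I_4) : Num.conj (op p i j) = op p j i.
Proof.
have H := all4P (all4P (all4P (all4P check_hermT (ltn_ord p.1)) (ltn_ord p.2)) (ltn_ord i)) (ltn_ord j).
have E (b : bool) n : (if b then w n else 0) = gval (cnt [:: (b, n)]).
  by rewrite ifsum big_cons big_nil addr0.
by rewrite !op_entry !E gval_conj (qeqP H).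
Qed.

Lemma sum_pt (G : pt -> C) :
  \sum_(q : pt) G q = \sum_(a < 4) \sum_(b < 4) G (a, b).
Proof. by rewrite pair_bigA; apply: eq_bigr => -[a b]. Qed.

Lemma completeness_rel (i j k l : 'I_4) :
  \sum_(q : pt) op q i j * op q k l = if (i == l) && (j == k) then 4 else 0.
Proof.
have H := all4P (all4P (all4P (all4P check_compT (ltn_ord i)) (ltn_ord j)) (ltn_ord k)) (ltn_ord l).
pose F := fun x : nat * nat =>
  if (nat_of_ord j == sgn x.1 x.2 i) && (nat_of_ord l == sgn x.1 x.2 k)
  then w (exn x.1 x.2 i + exn x.1 x.2 k) else 0.
rewrite sum_pt.
rewrite (eq_bigr (fun a : 'I_4 => \sum_(b <- iota 0 4) F (nat_of_ord a, b))); last first.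
  move=> a _; rewrite (eq_bigr (fun b : 'I_4 => F (nat_of_ord a, nat_of_ord b))).
    by rewrite (sum4 _ (fun b => F (nat_of_ord a, b))).
  by move=> b _; rewrite !op_entry ifmul.
rewrite (sum4 _ (fun a => \sum_(b <- iota 0 4) F (a, b))).
rewrite -big_allpairs.
have -> : \sum_(x <- [seq (a, b) | a <- iota 0 4, b <- iota 0 4]) F x = gval (cnt (compl i j k l)).
  by rewrite ifsum big_map.
rewrite (qeqP H) -!(inj_eq val_inj) /=.
by case: ifP => _ /=; rewrite ?subr0 ?mulr0 ?addr0.
Qed.

End F.

Local Close Scope ring_scope.
Local Open Scope ring_scope.

Section G.
Variable R : rcfType.
Local Notation C := R[i].
Local Notation w := (@w R).
Local Notation gval := (@gval R).
Local Notation op := (op R).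

Definition coef (q : pt) (M : 'M[C]_4) : C := 4^-1 * \tr (op q *m M).

Lemma sum_pick (i : 'I_4) (F : 'I_4 -> C) : \sum_l (if i == l then F l else 0) = F i.
Proof.
rewrite (bigD1 i) //= eqxx big1 ?addr0 // => l /negbTE.
by rewrite eq_sym => ->.
Qed.

Lemma complete (M : 'M[C]_4) : M = \sum_(q : pt) coef q M *: op q.
Proof.
apply/matrixP => i j; rewrite summxE.
have -> : \sum_(q : pt) (coef q M *: op q) i j =
    \sum_(q : pt) \sum_(k < 4) \sum_(l < 4) (4^-1 * M l k) * (op q i j * op q k l).
  apply: eq_bigr => q _; rewrite mxE /coef /mxtrace mulr_sumr mulr_suml.
  apply: eq_bigr => k _; rewrite mxE mulr_sumr mulr_suml.
  by apply: eq_bigr => l _; ring.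
rewrite exchange_big /=.
rewrite (eq_bigr (fun k => \sum_(l < 4) (4^-1 * M l k) * \sum_(q : pt) (op q i j * op q k l))); last first.
  move=> k _; rewrite exchange_big /=; apply: eq_bigr => l _.
  by rewrite mulr_sumr.
under eq_bigr do under eq_bigr do rewrite completeness_rel.
rewrite (eq_bigr (fun k => if j == k then 4^-1 * M i k * 4 else 0)); last first.
  move=> k _; rewrite -(sum_pick i (fun l => if j == k then 4^-1 * M l k * 4 else 0)).
  apply: eq_bigr => l _; rewrite [i == l]eq_sym.
  by case: (l == i); case: (j == k); rewrite ?mulr0 //=.
rewrite sum_pick mulrC mulrA mulfV ?mul1r // pnatr_eq0 //.
Qed.

End G.

Local Close Scope ring_scope.
Local Open Scope ring_scope.

Section H.
Variable R : rcfType.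
Local Notation C := R[i].
Local Notation w := (@w R).
Local Notation op := (op R).

Lemma sum_delta2 (i j : 'I_4) (y : C) (G : 'I_4 -> C) :
  \sum_l (((i == l)%:R + y * (j == l)%:R) * G l) = G i + y * G j.
Proof.
under eq_bigr do rewrite mulrDl.
rewrite big_split /=; congr (_ + _).
  rewrite -(sum_pick R i G); apply: eq_bigr => l _; by case: (i == l); rewrite ?mul1r ?mul0r.
rewrite -(sum_pick R j G) mulr_sumr; apply: eq_bigr => l _.
by case: (j == l); rewrite ?mulr1 ?mul1r ?mulr0 ?mul0r.
Qed.

Lemma quadE (M : 'M[C]_4) (i j : 'I_4) (x : C) :
  let v : 'cV[C]_4 := \col_k ((i == k)%:R + x * (j == k)%:R) in
  ((map_mx Num.conj v)^T *m M *m v) ord0 ord0 =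
  M i i + x * M i j + Num.conj x * (M j i + x * M j j).
Proof.
move=> v; rewrite mxE.
have -> : \sum_k ((map_mx Num.conj v)^T *m M) ord0 k * v k ord0 =
          \sum_k (((i == k)%:R + x * (j == k)%:R) * ((map_mx Num.conj v)^T *m M) ord0 k).
  by apply: eq_bigr => k _; rewrite [v k ord0]mxE mulrC.
rewrite sum_delta2 !mxE.
have E k : \sum_l ((map_mx Num.conj v)^T) ord0 l * M l k = M i k + Num.conj x * M j k.
  rewrite -(sum_delta2 i j (Num.conj x) (fun l => M l k)); apply: eq_bigr => l _; rewrite !mxE rmorphD rmorphM !rmorph_nat.
  by [].
by rewrite !E; ring.
Qed.

Lemma conj_i : Num.conj ('i%C : C) = - 'i%C.
Proof.
have -> : Num.conj ('i%C : C) = conjc 'i%C by [].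
by apply/eqP; rewrite eq_complex /= oppr0 !eqxx.
Qed.

Lemma psd_herm (M : 'M[C]_4) : psd M -> forall i j, M j i = Num.conj (M i j).
Proof.
move=> HM i j.
have Q i j x := HM (\col_k ((i == k)%:R + x * (j == k)%:R)).
have Q0 := Q i j 0; have Q1 := Q i j 1; have Qi := Q i j 'i%C.
rewrite quadE in Q0; rewrite quadE in Q1; rewrite quadE in Qi.
rewrite rmorph0 !mul0r !addr0 in Q0.
rewrite rmorph1 !mul1r in Q1.
rewrite conj_i in Qi.
have Qj := Q j j 0; rewrite quadE rmorph0 !mul0r !addr0 in Qj.
move: Q0 Q1 Qi Qj.
case: (M i i) => a1 b1; case: (M i j) => a2 b2; case: (M j i) => a3 b3; case: (M j j) => a4 b4.
rewrite !lecE /= => /andP[/eqP h1 _] /andP[/eqP h2 _] /andP[/eqP h3 _] /andP[/eqP h4 _].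
by apply/eqP; rewrite eq_complex /=; apply/andP; split; apply/eqP; lra.
Qed.

End H.

Local Close Scope ring_scope.
Local Open Scope ring_scope.

Lemma sgn_lt a b i : (sgn a b i < 4)%N.
Proof. rewrite /sgn; case: (s1 a (hf i)) => [|[|x]]; case: (s1 b (pr i)) => [|[|y]] //. Qed.

Section I.
Variable R : rcfType.
Local Notation C := R[i].
Local Notation w := (@w R).
Local Notation op := (op R).

Lemma cjM (a b : C) : Num.conj (a * b) = Num.conj a * Num.conj b.
Proof. exact: rmorphM. Qed.
Lemma cjS (F : 'I_4 -> C) : Num.conj (\sum_i F i) = \sum_i Num.conj (F i).
Proof. exact: rmorph_sum. Qed.
Lemma cj4 : Num.conj (4^-1 : C) = 4^-1.
Proof. by rewrite fmorphV rmorph_nat. Qed.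

Lemma coef_real (M : 'M[C]_4) : (forall i j, M j i = Num.conj (M i j)) ->
  forall q, Num.conj (coef R q M) = coef R q M.
Proof.
move=> HM q; rewrite /coef /mxtrace cjM cj4 cjS; congr (_ * _).
rewrite (eq_bigr (fun k => \sum_l op q l k * M k l)); last first.
  move=> k _; rewrite mxE cjS; apply: eq_bigr => l _.
  by rewrite cjM op_herm -HM.
rewrite exchange_big /=; apply: eq_bigr => k _; by rewrite mxE.
Qed.

Lemma real_of_conj (z : C) : Num.conj z = z -> ((complex.Re z)%:C)%C = z.
Proof.
case: z => a b H; have : Num.conj (a +i* b)%C = conjc (a +i* b)%C by [].
rewrite H => /= [[]] Hb; apply/eqP; rewrite eq_complex /= eqxx /=.
by apply/eqP; lra.
Qed.

Lemma op00 : op (ord0, ord0) = 1%:M.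
Proof.
apply/matrixP => i j; rewrite op_entry mxE /=.
case: i => [[|[|[|[|i]]]] Hi] //; case: j => [[|[|[|[|j]]]] Hj] //.
Qed.

Lemma trM (q : pt) (M : 'M[C]_4) : \tr (op q *m M) =
  \sum_(i <- iota 0 4) w (exn q.1 q.2 i) * M (inord (sgn q.1 q.2 i)) (inord i).
Proof.
rewrite /mxtrace.
pose F := fun n : nat => w (exn q.1 q.2 n) * M (inord (sgn q.1 q.2 n)) (inord n).
rewrite (eq_bigr (fun i : 'I_4 => F i)).
  by rewrite (sum4 _ F).
move=> i _; rewrite mxE /F inord_val.
rewrite (eq_bigr (fun k => if (inord (sgn q.1 q.2 i) : 'I_4) == k then w (exn q.1 q.2 i) * M k i else 0)).
  by rewrite sum_pick.
move=> k _; rewrite op_entry -(inj_eq val_inj) /= inordK ?sgn_lt // eq_sym.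
by case: ifP; rewrite ?mul0r.
Qed.

Lemma sum2 (F : 'I_2 -> C) : \sum_(k < 2) F k = F ord0 + F (@Ordinal 2 1 isT).
Proof.
rewrite big_ord_recr big_ord_recr big_ord0 /=; congr (_ + _).
  by rewrite add0r; congr F; apply: val_inj.
by congr F; apply: val_inj.
Qed.

Local Notation MM M n m := (M (@inord 3 n) (@inord 3 m)).

Lemma mmsAE (M : 'M[C]_4) : mms M ->
  [/\ MM M 0 0 = 2^-1 - MM M 1 1, MM M 0 2 = - MM M 1 3,
      MM M 2 0 = - MM M 3 1 & MM M 2 2 = 2^-1 - MM M 3 3].
Proof.
case=> HA _.
have E (x y : 'I_2) := congr1 (fun A : 'M[C]_2 => A x y) HA.
have E00 := E ord0 ord0; have E01 := E ord0 (@Ordinal 2 1 isT);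
have E10 := E (@Ordinal 2 1 isT) ord0; have E11 := E (@Ordinal 2 1 isT) (@Ordinal 2 1 isT).
have i00 : (2 * (ord0 : 'I_2) + (ord0 : 'I_2) = 0)%N by [].
have i01 : (2 * (ord0 : 'I_2) + (@Ordinal 2 1 isT) = 1)%N by [].
have i10 : (2 * (@Ordinal 2 1 isT) + (ord0 : 'I_2) = 2)%N by [].
have i11 : (2 * (@Ordinal 2 1 isT) + (@Ordinal 2 1 isT) = 3)%N by [].
have e01 : ((ord0 : 'I_2) == @Ordinal 2 1 isT) = false by [].
have e10 : ((@Ordinal 2 1 isT) == (ord0 : 'I_2)) = false by [].
move: E00 E01 E10 E11; rewrite /redA /= !mxE !sum2 i00 i01 i10 i11 e01 e10 !eqxx mulr1n mulr0n.
move=> E00 E01 E10 E11; split.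
- by rewrite -E00 addrK.
- by apply/eqP; rewrite -addr_eq0 E01.
- by apply/eqP; rewrite -addr_eq0 E10.
- by rewrite -E11 addrK.
Qed.

Lemma mmsBE (M : 'M[C]_4) : mms M ->
  [/\ MM M 0 0 = 2^-1 - MM M 2 2, MM M 0 1 = - MM M 2 3,
      MM M 1 0 = - MM M 3 2 & MM M 1 1 = 2^-1 - MM M 3 3].
Proof.
case=> _ HA.
have E (x y : 'I_2) := congr1 (fun A : 'M[C]_2 => A x y) HA.
have E00 := E ord0 ord0; have E01 := E ord0 (@Ordinal 2 1 isT);
have E10 := E (@Ordinal 2 1 isT) ord0; have E11 := E (@Ordinal 2 1 isT) (@Ordinal 2 1 isT).
have i00 : (2 * (ord0 : 'I_2) + (ord0 : 'I_2) = 0)%N by [].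
have i01 : (2 * (ord0 : 'I_2) + (@Ordinal 2 1 isT) = 1)%N by [].
have i10 : (2 * (@Ordinal 2 1 isT) + (ord0 : 'I_2) = 2)%N by [].
have i11 : (2 * (@Ordinal 2 1 isT) + (@Ordinal 2 1 isT) = 3)%N by [].
have e01 : ((ord0 : 'I_2) == @Ordinal 2 1 isT) = false by [].
have e10 : ((@Ordinal 2 1 isT) == (ord0 : 'I_2)) = false by [].
move: E00 E01 E10 E11; rewrite /redB /= !mxE !sum2 i00 i01 i10 i11 e01 e10 !eqxx mulr1n mulr0n.
move=> E00 E01 E10 E11; split.
- by rewrite -E00 addrK.
- by apply/eqP; rewrite -addr_eq0 E01.
- by apply/eqP; rewrite -addr_eq0 E10.
- by rewrite -E11 addrK.
Qed.

Lemma coef_g1 (M : 'M[C]_4) (q : pt) : mms M -> q \in group1 -> coef R q M = 0.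
Proof.
move=> Hm; have [A1 A2 A3 A4] := mmsAE M Hm; have [B1 B2 B3 B4] := mmsBE M Hm.
case: q => [[[|[|[|[|a]]]] Ha] [[|[|[|[|b]]]] Hb]] //; rewrite !inE //= => _;
  rewrite /coef trM !big_cons big_nil /sgn /exn /=.
1-3: rewrite ?B1 ?B2 ?B3 ?B4; ring.
all: rewrite ?A1 ?A2 ?A3 ?A4; ring.
Qed.

End I.



Local Close Scope ring_scope.
Local Open Scope ring_scope.

Section J.
Variable R : rcfType.
Local Notation C := R[i].
Local Notation op := (op R).

Lemma tr_sum (H : {set pt}) (F : pt -> 'M[C]_4) :
  \tr (\sum_(r in H) F r) = \sum_(r in H) \tr (F r).
Proof. exact: raddf_sum. Qed.

Lemma hstate_iff (H : {set pt}) (rho : 'M[C]_4) : H \subset Pts ->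
  (hstate H rho /\ mms rho) <->
  [/\ density rho, mms rho & forall q, q \in group2 -> q \notin H -> coef R q rho = 0].
Proof.
move=> HP; split.
  case=> [[Hd [c Hc]] Hm]; split => // q Hq2 HqH.
  rewrite /coef Hc -scalemxAr mxtraceZ mulmxDr mulmx1 mxtraceD tr_op.
  move: Hq2; rewrite !inE => /andP[H1 _]. rewrite (negbTE (H1 : (q.1 : nat) != 0%N)) /=.
  rewrite add0r mulmx_sumr tr_sum big1 ?mulr0 // => r Hr.
  rewrite -scalemxAr mxtraceZ tr_prod.
  case: eqP => [Eq|_]; last by rewrite mulr0.
  by move: HqH; rewrite Eq Hr.
case=> Hd Hm Hz; split => //; split => //.
have Hh := psd_herm R rho Hd.1.
exists (fun q => complex.Re (4 * coef R q rho)).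
have Er q : ((complex.Re (4 * coef R q rho))%:C)%C = 4 * coef R q rho.
  apply: real_of_conj; by rewrite cjM rmorph_nat (coef_real R rho Hh).
under eq_bigr do rewrite Er.
rewrite scalerDr scaler_sumr.
under [X in _ = _ + X]eq_bigr do rewrite scalerA mulrA mulVf ?mul1r ?pnatr_eq0 //.
rewrite {1}(complete R rho) (bigD1 (ord0, ord0)) //= op00.
have -> : coef R (ord0, ord0) rho = 4^-1.
  by rewrite /coef op00 mul1mx Hd.2 mulr1.
rewrite -scalemx1; congr (_ + _).
rewrite big_mkcond [RHS]big_mkcond; apply: eq_bigr => q _.
case: (boolP (q \in H)) => qH.
  by move: (subsetP HP q qH); rewrite inE => ->.
case: (boolP (q == (ord0, ord0))) => //= q0.
case: (boolP (q \in group2)) => q2.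
  by rewrite Hz // scale0r.
rewrite coef_g1 ?scale0r //.
by move: q2; rewrite !inE negb_and !negbK q0.
Qed.

End J.

Local Close Scope ring_scope.

Definition comk (i j : nat) := commn (i %/ 4) (i %% 4) (j %/ 4) (j %% 4).
Definition xork (i j : nat) := (4 * lx (i %/ 4) (j %/ 4) + lx (i %% 4) (j %% 4))%N.
Definition linek (i j k : nat) :=
  [&& i != 0%N, j != 0%N, k != 0%N, i != j, j != k, i != k,
      comk i j, comk j k, comk i k & k == xork i j].
Definition lines_k : seq (nat * nat * nat) :=
  [seq (i, j, xork i j) | i <- iota 0 16, j <- [seq j <- iota 0 16 | linek i j (xork i j)]].
Definition hypb (bs : seq bool) : bool :=
  all (fun t => let s := (nth false bs t.1.1 + nth false bs t.1.2 + nth false bs t.2)%N in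
                (s == 1%N) || (s == 3%N)) lines_k.
Fixpoint subs (k n : nat) : seq (seq bool) :=
  match n with
  | 0 => if k is 0 then [:: [::]] else [::]
  | n'.+1 => map (cons false) (subs k n') ++
             (if k is k'.+1 then map (cons true) (subs k' n') else [::])
  end.
Definition grid_bits := [seq bs <- map (cons false) (subs 9 15) | hypb bs].
Definition noncommb (bs : seq bool) :=
  all (fun i => all (fun j => [&& nth false bs i, nth false bs j & i != j] ==> ~~ comk i j)
    (iota 0 16)) (iota 0 16).
Definition ov_bits := [seq bs <- map (cons false) (subs 5 15) | hypb bs && noncommb bs].
Definition g2k (k : nat) := (k %/ 4 != 0)%N && (k %% 4 != 0)%N.
Definition g1k (k : nat) := (k != 0)%N && ((k %/ 4 == 0)%N || (k %% 4 == 0)%N).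
Definition matchk (k : nat) (bs : seq bool) :=
  all (fun m => g2k m ==> (nth false bs m == (m != 0%N) && comk m k)) (iota 0 16).
Definition fk (bs : seq bool) := find (fun k => g2k k && matchk k bs) (iota 0 16).
Definition gk (bs : seq bool) := find (fun k => g1k k && matchk k bs) (iota 0 16).
Definition bQ0 := [seq g2k k | k <- iota 0 16].

Definition CG := 
  [&& all (fun bs => [&& size bs == 16, count id bs == 9, head true bs == false & hypb bs]) grid_bits,
      all (fun bs => (bs == bQ0) || [&& fk bs < 16, g2k (fk bs) & matchk (fk bs) bs]) grid_bits,
      all (fun bs => all (fun bs' => [|| bs == bQ0, bs' == bQ0, fk bs != fk bs' | bs == bs']) grid_bits) grid_bits
    & all (fun k => g2k k ==> has (fun bs => (bs != bQ0) && (fk bs == k)) grid_bits) (iota 0 16)]%N.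
Definition CO :=
  [&& all (fun bs => [&& size bs == 16, count id bs == 5, head true bs == false, hypb bs & noncommb bs]) ov_bits,
      all (fun bs => [&& gk bs < 16, g1k (gk bs) & matchk (gk bs) bs]) ov_bits,
      all (fun bs => all (fun bs' => (gk bs != gk bs') || (bs == bs')) ov_bits) ov_bits
    & all (fun k => g1k k ==> has (fun bs => gk bs == k) ov_bits) (iota 0 16)]%N.
Lemma CGT : CG. Proof. vm_compute. reflexivity. Qed.
Lemma COT : CO. Proof. vm_compute. reflexivity. Qed.

Definition idx (p : pt) : nat := (4 * p.1 + p.2)%N.
Definition ptk (k : nat) : pt := (inord (k %/ 4), inord (k %% 4)).

Lemma idx_div p : (idx p %/ 4 = p.1)%N.
Proof. have := ltn_ord p.2; rewrite /idx; lia. Qed.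
Lemma idx_mod p : (idx p %% 4 = p.2)%N.
Proof. have := ltn_ord p.2; rewrite /idx; lia. Qed.
Lemma idx_lt p : (idx p < 16)%N.
Proof. have := ltn_ord p.2; have := ltn_ord p.1; rewrite /idx; lia. Qed.
Lemma ptk_idx p : ptk (idx p) = p.
Proof. by case: p => a b; rewrite /ptk idx_div idx_mod !inord_val. Qed.
Lemma idx_inj p q : idx p = idx q -> p = q.
Proof. by move=> E; rewrite -(ptk_idx p) E ptk_idx. Qed.
Lemma idx_ptk k : (k < 16)%N -> idx (ptk k) = k.
Proof.
move=> Hk; rewrite /idx /ptk /= !inordK; try lia.
Qed.

Lemma inPts p : (p \in Pts) = (idx p != 0%N).
Proof.
rewrite inE pt_eqE /idx; case: p => a b /=.
by apply/negb_inj; rewrite !negbK; apply/andP/eqP; lia.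
Qed.
Lemma inQ0 p : (p \in Q0) = g2k (idx p).
Proof. by rewrite inE /g2k idx_div idx_mod. Qed.
Lemma ing1 p : (p \in group1) = g1k (idx p).
Proof. by rewrite inE inPts /g1k idx_div idx_mod. Qed.
Lemma commuteK (R : rcfType) p q : Defs.commute R p q = comk (idx p) (idx q).
Proof. by rewrite commuteE /comk !idx_div !idx_mod. Qed.
Lemma inperp (R : rcfType) q p : (q \in perp R p) = (idx q != 0%N) && comk (idx q) (idx p).
Proof. by rewrite inE inPts commuteK. Qed.
Lemma pxor_idx p q : idx (pxor p q) = xork (idx p) (idx q).
Proof. by rewrite /xork !idx_div !idx_mod. Qed.
Local Open Scope ring_scope.

Section M.
Variable R : rcfType.
Local Notation C := R[i].
Local Notation op := (op R).
Local Notation w := (@w R).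

Lemma line_lam p q r : (exists lam : C, op r = lam *: (op p *m op q)) <-> r = pxor p q.
Proof.
rewrite op_prod; split.
  case=> lam; rewrite scalerA => E.
  apply/eqP; apply/negPn/negP => Hne.
  have := congr1 (fun M => \tr (op (pxor p q) *m M)) E.
  rewrite /= -scalemxAr mxtraceZ !tr_prod eqxx eq_sym (negbTE Hne) => /esym /eqP.
  rewrite mulf_eq0 pnatr_eq0 orbF => /eqP H0.
  by move: (op_neq0 R r); rewrite E H0 scale0r eqxx.
move=> ->; exists (w (3 * ph p.1 p.2 q.1 q.2)); rewrite scalerA -wD.
have -> : (3 * ph p.1 p.2 q.1 q.2 + ph p.1 p.2 q.1 q.2 = 4 * ph p.1 p.2 q.1 q.2)%N by lia.
by rewrite (wmod R) modnMr /= scale1r.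
Qed.

Lemma is_lineE p q r : is_line R p q r <-> linek (idx p) (idx q) (idx r).
Proof.
rewrite /is_line !inPts -!(inj_eq idx_inj) !commuteK; split.
  case=> /and3P[h1 h2 h3] /and3P[h4 h5 h6] /and3P[h7 h8 h9] /line_lam Hr.
  by rewrite /linek h1 h2 h3 h4 h5 h6 h7 h8 h9 Hr pxor_idx eqxx.
move=> /andP[h1 /andP[h2 /andP[h3 /andP[h4 /andP[h5 /andP[h6 /andP[h7 /andP[h8 /andP[h9 /eqP h10]]]]]]]]].
split; try by apply/and3P.
by apply/line_lam; apply: idx_inj; rewrite pxor_idx.
Qed.

End M.

Local Close Scope ring_scope.

Definition pts_seq : seq pt := [seq ptk k | k <- iota 0 16].
Definition bits (H : {set pt}) : seq bool := [seq p \in H | p <- pts_seq].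
Definition setb (bs : seq bool) : {set pt} := [set p : pt | nth false bs (idx p)].

Lemma size_bits (H : {set pt}) : size (bits H) = 16%N.
Proof. by rewrite /bits !size_map size_iota. Qed.

Lemma nth_bits (H : {set pt}) k : (k < 16)%N -> nth false (bits H) k = (ptk k \in H).
Proof.
move=> Hk; rewrite /bits (nth_map (ptk 0)) ?size_map ?size_iota //.
by rewrite (nth_map 0%N) ?size_iota // nth_iota.
Qed.

Lemma in_bits (H : {set pt}) (p : pt) : (p \in H) = nth false (bits H) (idx p).
Proof. by rewrite nth_bits ?idx_lt // ptk_idx. Qed.

Lemma bits_inj (H H' : {set pt}) : bits H = bits H' -> H = H'.
Proof. by move=> E; apply/setP => p; rewrite !in_bits E. Qed.

Lemma bits_setb bs : size bs = 16%N -> bits (setb bs) = bs.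
Proof.
move=> Hs; apply: (@eq_from_nth _ false); first by rewrite size_bits Hs.
by move=> k; rewrite size_bits => Hk; rewrite nth_bits // inE idx_ptk.
Qed.

Lemma uniq_pts : uniq pts_seq.
Proof.
rewrite map_inj_in_uniq ?iota_uniq // => i j; rewrite !mem_iota /= => Hi Hj E.
have := idx_ptk i; have := idx_ptk j; rewrite E; lia.
Qed.

Lemma mem_pts p : p \in pts_seq.
Proof. by rewrite -(ptk_idx p); apply: map_f; rewrite mem_iota idx_lt. Qed.

Lemma card_filt (H S : {set pt}) (s : seq pt) :
  uniq s -> S =i s -> #|H :&: S| = count (mem H) s.
Proof.
move=> Us ES; have U : uniq (filter (mem H) s) := filter_uniq _ Us.
rewrite -size_filter; move/card_uniqP: U => <-.
by apply: eq_card => x; rewrite !inE mem_filter ES.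
Qed.

Lemma card_bits (H : {set pt}) : #|H| = count id (bits H).
Proof.
have -> : #|H| = #|H :&: setT| by rewrite setIT.
rewrite (card_filt H setT pts_seq uniq_pts) ?count_map // => x.
by rewrite inE mem_pts.
Qed.

Lemma card3 (H : {set pt}) p q r : p != q -> q != r -> p != r ->
  #|H :&: [set p; q; r]| = ((p \in H) + (q \in H) + (r \in H))%N.
Proof.
move=> pq qr pr; rewrite (card_filt H _ [:: p; q; r]) /=.
- by rewrite addn0 addnA.
- by rewrite /= !inE negb_or pq pr qr.
- by move=> x; rewrite !inE ?orbF ?orbA.
Qed.

Lemma xork_lt i j : (i < 16)%N -> (j < 16)%N -> (xork i j < 16)%N.
Proof.
move=> Hi Hj; rewrite /xork.
have h1 : (lx (i %/ 4) (j %/ 4) < 4)%N by apply: lx_lt; lia.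
have h2 : (lx (i %% 4) (j %% 4) < 4)%N by apply: lx_lt; lia.
lia.
Qed.


Lemma ptk_neq a b : (a < 16)%N -> (b < 16)%N -> a != b -> ptk a != ptk b.
Proof. by move=> Ha Hb; apply: contra_neq => /(congr1 idx); rewrite !idx_ptk. Qed.

Section N.
Variable R : rcfType.

Lemma hyperplaneE (H : {set pt}) : hyperplane R H <-> (H \subset Pts /\ hypb (bits H)).
Proof.
split.
  case=> HP Hl; split => //; apply/allP => -[[i j] k] /allpairsPdep [i' [j' [Hi Hj E]]].
  case: E => -> -> ->.
  move: Hi Hj; rewrite mem_iota mem_filter mem_iota => /andP[_ Hi] /andP[Hlk /andP[_ Hj]].
  have Hi' : (i' < 16)%N by lia.
  have Hj' : (j' < 16)%N by lia.
  have Hk := xork_lt _ _ Hi' Hj'.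
  have L : is_line R (ptk i') (ptk j') (ptk (xork i' j')) by apply/is_lineE; rewrite !idx_ptk.
  move: (Hlk) => /andP[_ /andP[_ /andP[_ /andP[Hij /andP[Hjk /andP[Hik _]]]]]].
  have := Hl _ _ _ L; rewrite card3 ?ptk_neq // !(in_bits H) !idx_ptk //=.
  by case=> E; rewrite E.
case=> HP Hb; split => // p q r /is_lineE Hlk.
move: (Hlk) => /andP[_ /andP[_ /andP[_ /andP[Hpq /andP[Hqr /andP[Hpr /andP[_ /andP[_ /andP[_ /eqP Er]]]]]]]]].
have Hm : (idx p, idx q, idx r) \in lines_k.
  apply/allpairsPdep; exists (idx p), (idx q); split.
  - by rewrite mem_iota add0n idx_lt.
  - by rewrite mem_filter mem_iota add0n idx_lt -Er Hlk.
  - by rewrite Er.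
have := allP Hb _ Hm; rewrite /= -!in_bits card3.
- by case/orP => /eqP ->; [left|right].
- by apply: contra_neq Hpq => ->.
- by apply: contra_neq Hqr => ->.
- by apply: contra_neq Hpr => ->.
Qed.

End N.

Lemma subsP bs : bs \in subs (count id bs) (size bs).
Proof.
elim: bs => [|b bs IH] //=; rewrite mem_cat; case: b => /=.
  by rewrite add1n /= map_f ?orbT.
by rewrite add0n map_f.
Qed.

Lemma CG1 bs : bs \in grid_bits ->
  [&& size bs == 16, count id bs == 9, head true bs == false & hypb bs]%N.
Proof. by move: CGT; rewrite /CG => /and4P[/allP H _ _ _]; apply: H. Qed.
Lemma CG2 bs : bs \in grid_bits -> bs != bQ0 -> [&& fk bs < 16, g2k (fk bs) & matchk (fk bs) bs]%N.
Proof. by move: CGT; rewrite /CG => /and4P[_ /allP H _ _] /H /orP[/eqP ->|//]; rewrite eqxx. Qed.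
Lemma CG3 bs bs' : bs \in grid_bits -> bs' \in grid_bits -> bs != bQ0 -> bs' != bQ0 ->
  fk bs = fk bs' -> bs = bs'.
Proof.
move: CGT; rewrite /CG => /and4P[_ _ /allP H _].
move=> /H /allP H' /H' /or4P [E|E|E|/eqP E] Hb Hb' Hf.
- by rewrite E in Hb.
- by rewrite E in Hb'.
- by rewrite Hf eqxx in E.
- exact: E.
Qed.

Lemma CG4 k : (k < 16)%N -> g2k k -> exists2 bs, bs \in grid_bits & (bs != bQ0) && (fk bs == k).
Proof.
move: CGT; rewrite /CG => /and4P[_ _ _ /allP H] Hl Hk.
have Hk16 : k \in iota 0 16 by rewrite mem_iota add0n Hl.
by move: (H k Hk16); rewrite Hk implyTb => /hasP.
Qed.

Lemma CO1 bs : bs \in ov_bits ->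
  [&& size bs == 16, count id bs == 5, head true bs == false, hypb bs & noncommb bs]%N.
Proof. by move: COT; rewrite /CO => /and4P[/allP H _ _ _]; apply: H. Qed.
Lemma CO2 bs : bs \in ov_bits -> [&& gk bs < 16, g1k (gk bs) & matchk (gk bs) bs]%N.
Proof. by move: COT; rewrite /CO => /and4P[_ /allP H _ _]; apply: H. Qed.
Lemma CO3 bs bs' : bs \in ov_bits -> bs' \in ov_bits -> gk bs = gk bs' -> bs = bs'.
Proof.
move: COT; rewrite /CO => /and4P[_ _ /allP H _].
move=> /H /allP H' /H' /orP [E|/eqP E] Hf.
- by rewrite Hf eqxx in E.
- exact: E.
Qed.
Lemma CO4 k : (k < 16)%N -> g1k k -> exists2 bs, bs \in ov_bits & gk bs == k.
Proof.
move: COT; rewrite /CO => /and4P[_ _ _ /allP H] Hl Hk.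
have Hk16 : k \in iota 0 16 by rewrite mem_iota add0n Hl.
by move: (H k Hk16); rewrite Hk implyTb => /hasP.
Qed.

Lemma bits_head0 (Q : {set pt}) : Q \subset Pts -> bits Q = false :: behead (bits Q).
Proof.
move=> HP.
have H0 : nth false (bits Q) 0 = false.
  rewrite nth_bits //; apply/negP => /(subsetP HP); rewrite inPts idx_ptk //.
move: (size_bits Q) H0; case: (bits Q) => [|b t] //= _ -> //.
Qed.

Lemma setb_sub bs : size bs = 16%N -> head true bs = false -> setb bs \subset Pts.
Proof.
move=> Hs Hh; apply/subsetP => p; rewrite inE inPts; apply: contraTneq => E.
rewrite E; move: Hs Hh; case: bs => [|b t] //= _ -> //.
Qed.

Lemma bitsQ0 : bits Q0 = bQ0.
Proof.
apply: (@eq_from_nth _ false); first by rewrite size_bits size_map size_iota.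
move=> k; rewrite size_bits => Hk.
by rewrite nth_bits // inQ0 idx_ptk // (nth_map 0%N) ?size_iota // nth_iota.
Qed.

Lemma matchkP k bs q : matchk k bs -> g2k (idx q) ->
  nth false bs (idx q) = (idx q != 0%N) && comk (idx q) k.
Proof.
move=> /allP H Hq; have := H (idx q); rewrite mem_iota add0n idx_lt Hq implyTb.
by move=> /(_ isT) /eqP.
Qed.

Section P.
Variable R : rcfType.

Lemma grid_in (Q : {set pt}) : grid R Q -> bits Q \in grid_bits.
Proof.
case=> /hyperplaneE [HP Hb] Hc.
have E := bits_head0 _ HP.
rewrite /grid_bits mem_filter Hb andTb E; apply: map_f.
have Hs : size (behead (bits Q)) = 15%N by rewrite size_behead size_bits.
have Hcnt : count id (behead (bits Q)) = 9%N.
  by move: Hc; rewrite card_bits E /= add0n.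
by have := subsP (behead (bits Q)); rewrite Hs Hcnt.
Qed.

Lemma ov_in (O : {set pt}) : ovoid R O -> bits O \in ov_bits.
Proof.
case=> /hyperplaneE [HP Hb] Hc Hnc.
have E := bits_head0 _ HP.
have Hn : noncommb (bits O).
  apply/allP => i; rewrite mem_iota add0n => /andP[_ Hi].
  apply/allP => j; rewrite mem_iota add0n => /andP[_ Hj].
  apply/implyP => /and3P[bi bj ij].
  rewrite nth_bits // in bi; rewrite nth_bits // in bj.
  by have := Hnc _ _ bi bj (ptk_neq _ _ Hi Hj ij); rewrite commuteK !idx_ptk.
rewrite /ov_bits mem_filter Hb Hn andTb E; apply: map_f.
have Hs : size (behead (bits O)) = 15%N by rewrite size_behead size_bits.
have Hcnt : count id (behead (bits O)) = 5%N.
  by move: Hc; rewrite card_bits E /= add0n.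
by have := subsP (behead (bits O)); rewrite Hs Hcnt.
Qed.

Lemma setb_grid bs : bs \in grid_bits -> grid R (setb bs).
Proof.
move=> Hbs; have /and4P[/eqP Hs /eqP Hc /eqP Hh Hb] := CG1 _ Hbs.
split; last by rewrite card_bits bits_setb.
apply/hyperplaneE; rewrite bits_setb //; split => //.
exact: setb_sub.
Qed.

Lemma setb_ov bs : bs \in ov_bits -> ovoid R (setb bs).
Proof.
move=> Hbs; have /and5P[/eqP Hs /eqP Hc /eqP Hh Hb Hn] := CO1 _ Hbs.
split; first (apply/hyperplaneE; rewrite bits_setb //; split => //; exact: setb_sub).
  by rewrite card_bits bits_setb.
move=> p q; rewrite !inE => bp bq pq; rewrite commuteK.
have Hp : idx p \in iota 0 16 by rewrite mem_iota add0n idx_lt.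
have Hq : idx q \in iota 0 16 by rewrite mem_iota add0n idx_lt.
move: (allP (allP Hn _ Hp) _ Hq) => /implyP; apply.
by rewrite bp bq (inj_eq idx_inj) pq.
Qed.

End P.
Local Open Scope ring_scope.

Lemma ptk_inj a b : (a < 16)%N -> (b < 16)%N -> ptk a = ptk b -> a = b.
Proof. by move=> Ha Hb E; rewrite -(idx_ptk a Ha) -(idx_ptk b Hb) E. Qed.

Lemma Q0_sub : Q0 \subset Pts.
Proof.
apply/subsetP => p; rewrite inQ0 inPts /g2k idx_div idx_mod => /andP[h1 h2].
by rewrite /idx; lia.
Qed.

Lemma perp_sub (R : rcfType) p : perp R p \subset Pts.
Proof. by apply/subsetP => q; rewrite inE => /andP[]. Qed.

Lemma same_states (R : rcfType) (H1 H2 : {set pt}) :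
  H1 \subset Pts -> H2 \subset Pts ->
  (forall q, q \in group2 -> (q \in H1) = (q \in H2)) ->
  forall rho : 'M[R[i]]_4, (hstate H1 rho /\ mms rho) <-> (hstate H2 rho /\ mms rho).
Proof.
move=> P1 P2 Eq rho.
apply: iff_trans (hstate_iff R H1 rho P1) _.
apply: iff_trans _ (iff_sym (hstate_iff R H2 rho P2)).
split; case=> d m c; split => // q Hq Hn; apply: (c q Hq).
  by rewrite (Eq q Hq).
by rewrite -(Eq q Hq).
Qed.

Theorem proposition4 (R : rcfType) :
  (* (i) *)
  (forall rho : 'M[R[i]]_4,
     (hstate Q0 rho /\ mms rho) <-> (density rho /\ mms rho)) /\
  (* (ii) *)
  (exists f : {set pt} -> pt,
     [/\ forall Q, grid R Q -> Q != Q0 ->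
           f Q \in group2 /\
           (forall rho : 'M[R[i]]_4,
              (hstate Q rho /\ mms rho) <-> (hstate (perp R (f Q)) rho /\ mms rho)),
         forall Q Q', grid R Q -> Q != Q0 -> grid R Q' -> Q' != Q0 ->
           f Q = f Q' -> Q = Q'
       & forall p, p \in group2 -> exists Q, [/\ grid R Q, Q != Q0 & f Q = p]]) /\
  (* (iii) *)
  (exists g : {set pt} -> pt,
     [/\ forall O, ovoid R O ->
           g O \in group1 /\
           (forall rho : 'M[R[i]]_4,
              (hstate O rho /\ mms rho) <-> (hstate (perp R (g O)) rho /\ mms rho)),
         forall O O', ovoid R O -> ovoid R O' -> g O = g O' -> O = O'
       & forall p, p \in group1 -> exists O, ovoid R O /\ g O = p]).
Proof.
split.
  move=> rho; apply: iff_trans (hstate_iff R Q0 rho Q0_sub) _.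
  split; first by case.
  case=> d m; split => // q Hq; by rewrite /group2 in Hq; rewrite Hq.
split.
  exists (fun Q => ptk (fk (bits Q))); split.
  - move=> Q HQ HQ0.
    have Hin := grid_in R Q HQ.
    have Hne : bits Q != bQ0.
      by rewrite -bitsQ0; apply: contra_neq HQ0 => /bits_inj.
    have /and3P[Hlt Hg2 Hm] := CG2 _ Hin Hne.
    split; first by rewrite /group2 inQ0 idx_ptk.
    apply: same_states; first by case: HQ => [[]].
      exact: perp_sub.
    move=> q; rewrite /group2 inQ0 => Hq.
    by rewrite inperp (idx_ptk _ Hlt) in_bits (matchkP _ _ _ Hm Hq).
  - move=> Q Q' HQ HQ0 HQ' HQ0' E.
    have Hin := grid_in R Q HQ; have Hin' := grid_in R Q' HQ'.
    have Hne : bits Q != bQ0.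
      by rewrite -bitsQ0; apply: contra_neq HQ0 => /bits_inj.
    have Hne' : bits Q' != bQ0.
      by rewrite -bitsQ0; apply: contra_neq HQ0' => /bits_inj.
    have /and3P[Hlt _ _] := CG2 _ Hin Hne.
    have /and3P[Hlt' _ _] := CG2 _ Hin' Hne'.
    apply: bits_inj; apply: (CG3 _ _ Hin Hin' Hne Hne').
    exact: (ptk_inj _ _ Hlt Hlt' E).
  - move=> p; rewrite /group2 inQ0 => Hp.
    have [bs Hbs /andP[Hne /eqP Hf]] := CG4 _ (idx_lt p) Hp.
    have /and4P[/eqP Hs _ _ _] := CG1 _ Hbs.
    exists (setb bs); split.
    + exact: setb_grid.
    + by apply: contra_neq Hne => E; rewrite -bitsQ0 -E bits_setb.
    + by rewrite (bits_setb _ Hs) Hf ptk_idx.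
exists (fun O => ptk (gk (bits O))); split.
- move=> O HO.
  have Hin := ov_in R O HO.
  have /and3P[Hlt Hg1 Hm] := CO2 _ Hin.
  split; first by rewrite ing1 idx_ptk.
  apply: same_states; first by case: HO => [[]].
    exact: perp_sub.
  move=> q; rewrite /group2 inQ0 => Hq.
  by rewrite inperp (idx_ptk _ Hlt) in_bits (matchkP _ _ _ Hm Hq).
- move=> O O' HO HO' E.
  have Hin := ov_in R O HO; have Hin' := ov_in R O' HO'.
  have /and3P[Hlt _ _] := CO2 _ Hin.
  have /and3P[Hlt' _ _] := CO2 _ Hin'.
  apply: bits_inj; apply: (CO3 _ _ Hin Hin').
  exact: (ptk_inj _ _ Hlt Hlt' E).
- move=> p; rewrite ing1 => Hp.
  have [bs Hbs /eqP Hf] := CO4 _ (idx_lt p) Hp.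
  have /and5P[/eqP Hs _ _ _ _] := CO1 _ Hbs.
  exists (setb bs); split.
  + exact: setb_ov.
  + by rewrite (bits_setb _ Hs) Hf ptk_idx.
Qed.

Local Close Scope ring_scope.
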